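(* Let $n\ge1$, distinct real $a_1,\dots,a_n$, $F(a)=\sum_{k=0}^nA_ka^k=\prod_{i=1}^n(a-a_i)$, signs $\epsilon_i$, reals $\xi_i,\nu_n$, $\Delta_i=\epsilon_i(a-a_i)$, $x=\frac{\nu_n}2a+\sum_i\xi_i\Delta_i^{-1/2}$ on an interval of $a>0$ where all $\Delta_i>0$ and $\dot x\ne0$. Let $H=\Pi^2+aP_y^2$, $\Pi=\frac a{\dot x}P_a$, $$G=\sum_{k=0}^nA_{n-k}H^{n-k}P_y^{2k+1},\ Q_1=\sum_{k=0}^n\tilde b_kH^{n-k}\Pi P_y^{2k},\ Q_2=\sum_{k=0}^n\tilde c_kH^{n-k}P_y^{2k+1},\ S_1=Q_1+yG,\ S_2=Q_2+yQ_1+\tfrac{y^2}2G,$$ with $\tilde b_k=(-1)^k\big(\nu_n\sigma_k+\sum_i\frac{\xi_i}{\sqrt{\Delta_i}}\sigma^i_{k-1}\big)$ and $\tilde c_k=\frac{(-1)^{k+1}}2\big\{\nu_n^2a\sigma_k+2\nu_n\sum_i\frac{\xi_i}{\sqrt{\Delta_i}}(\sigma^i_k+a\sigma^i_{k-1})+\sum_i\frac{\xi_i^2}{\Delta_i}\sigma^i_{k-1}+\sum_{i\ne j}\frac{\xi_i\xi_j}{\sqrt{\Delta_i\Delta_j}}(\sigma^{ij}_{k-1}+a\sigma^{ij}_{k-2})\big\}$. Then $$S_1^2-2G\,S_2=\sum_{k,l=1}^n\mathcal{Q}_{kl}\,H^{2n-k-l}P_y^{2(k+l+1)}+\nu_n^2\sum_{k,l=0}^n(-1)^{k+l}\sigma_k\sigma_l\,H^{2n+1-k-l}P_y^{2(k+l)},$$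 where $\mathcal{Q}_{kl}=(-1)^{k+l+1}\sum_{i=1}^n\epsilon_i\xi_i^2\sigma^i_{k-1}\sigma^i_{l-1}$.
   Context: Symmetric functions: $\sigma_k$ by $\prod_i(a-a_i)=\sum_{k=0}^n(-1)^k\sigma_ka^{n-k}$; $\sigma^i_m$ ($-1\le m\le n$) by $\prod_{l\ne i}(a-a_l)=\sum_{m=0}^{n-1}(-1)^m\sigma^i_ma^{n-1-m}$ with $\sigma^i_{-1}=\sigma^i_n=0$; $\sigma^{ij}_m$ ($i\ne j$, $-2\le m\le n$) by $\prod_{l\ne i,j}(a-a_l)=\sum_{m=0}^{n-2}(-1)^m\sigma^{ij}_ma^{n-2-m}$ with $\sigma^{ij}_{-2}=\sigma^{ij}_{-1}=\sigma^{ij}_{n-1}=\sigma^{ij}_n=0$. *)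

(* Defs.v *)
From HB Require Import structures.
From mathcomp Require Import all_boot all_order all_algebra.
From mathcomp Require Import all_classical all_reals all_analysis.
Set Implicit Arguments. Unset Strict Implicit. Unset Printing Implicit Defensive.
Import Order.TTheory GRing.Theory Num.Theory.
Local Open Scope ring_scope.

(* Elementary symmetric functions of the family (a l)_{l in I}, defined as in
   the paper through the expansion
     prod_{l in I} (X - a_l) = sum_{m=0}^{#|I|} (-1)^m esym_m X^{#|I|-m},
   indexed by an integer m, and equal to 0 for m < 0 or m > #|I|. *)
Definition esym (R : comNzRingType) (n : nat) (a : 'I_n -> R) (I : {set 'I_n})
    (m : int) : R :=
  match m with
  | Posz k => if (k <= #|I|)%N then
                (-1) ^+ k * (\prod_(l in I) ('X - (a l)%:P))`_(#|I| - k)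
              else 0
  | Negz _ => 0
  end.

Definition sigma (R : comNzRingType) n (a : 'I_n -> R) (k : int) : R :=
  esym a [set: 'I_n] k.
Definition sigma1 (R : comNzRingType) n (a : 'I_n -> R) (i : 'I_n) (m : int) : R :=
  esym a (~: [set i]) m.
Definition sigma2 (R : comNzRingType) n (a : 'I_n -> R) (i j : 'I_n) (m : int) : R :=
  esym a (~: [set i; j]) m.

Definition Acoef (R : comNzRingType) n (a : 'I_n -> R) (k : nat) : R :=
  (\prod_(i < n) ('X - (a i)%:P))`_k.

(* Main.v *)
Require Import Defs.
From HB Require Import structures.
From mathcomp Require Import all_boot all_order all_algebra.
From mathcomp Require Import ring lra zify.
Import Order.TTheory GRing.Theory Num.Theory.
Set Implicit Arguments. Unset Strict Implicit. Unset Printing Implicit Defensive.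
Local Open Scope ring_scope.

Lemma size_prodI (F : fieldType) n (a : 'I_n -> F) (I : {set 'I_n}) :
  size (\prod_(l in I) ('X - (a l)%:P)) = #|I|.+1.
Proof. by rewrite -big_filter size_prod_XsubC cardE /enum_mem. Qed.

Lemma hom_eval (F : fieldType) n (a : 'I_n -> F) (I : {set 'I_n}) (H u : F) :
  \sum_(j < #|I|.+1) (\prod_(l in I) ('X - (a l)%:P))`_j * H ^+ j * u ^+ (#|I| - j)
  = \prod_(l in I) (H - a l * u).
Proof.
set p := \prod_(l in I) _.
have sp : size p = #|I|.+1 by apply: size_prodI.
have lc : p`_#|I| = 1.
  by have := lead_coef_prod_XsubC (index_enum 'I_n) (mem I) a; rewrite lead_coefE sp.
have [->|u0] := eqVneq u 0.
  under [RHS]eq_bigr => l _ do rewrite mulr0 subr0.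
  rewrite prodr_const big_ord_recr /= lc subnn expr0 mulr1 mul1r big1 ?add0r //.
  move=> j _; rewrite expr0n /=. have := ltn_ord j. case: (_ - _)%N (@subn_eq0 #|I| j) => [|k] /=.
    by move/esym/(@leq_trans _ _ _ _) => h /h; rewrite ltnn.
  by rewrite mulr0.
transitivity (u ^+ #|I| * p.[H / u]).
  rewrite (horner_coef_wide _ (eq_leq sp)) mulr_sumr; apply: eq_bigr => j _.
  have hj : (j <= #|I|)%N by rewrite -ltnS.
  rewrite [u ^+ #|I|](_ : _ = u ^+ (#|I| - j) * u ^+ j); last by rewrite -exprD subnK.
  rewrite expr_div_n.
  field. by rewrite expf_neq0.
rewrite horner_prod -prodrMl; apply: eq_bigr => l _; rewrite hornerXsubC.
field. done.
Qed.


Lemma sgsg (F : comNzRingType) k : (-1) ^+ k * (-1) ^+ k = 1 :> F.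
Proof. by rewrite -exprD -signr_odd oddD addbb. Qed.

Definition Ph (F : comNzRingType) n (a : 'I_n -> F) (H u : F) (I : {set 'I_n}) :=
  \prod_(l in I) (H - a l * u).

Lemma L1 (F : fieldType) n (a : 'I_n -> F) (I : {set 'I_n}) (H u : F) M :
  (#|I| <= M)%N ->
  \sum_(0 <= m < M.+1) (-1) ^+ m * Defs.esym a I m * H ^+ (M - m) * u ^+ m
  = H ^+ (M - #|I|) * Ph a H u I.
Proof.
move=> hM.
rewrite (big_cat_nat (n:=#|I|.+1)) //=.
rewrite [X in _ + X]big1_seq ?addr0; last first.
  move=> m /andP[_]; rewrite mem_index_iota => /andP[h1 _].
  rewrite /Defs.esym leqNgt h1 /=.
  by rewrite mulr0 !mul0r.
rewrite big_nat_rev /= add0n big_mkord /Ph -hom_eval mulr_sumr.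
apply: eq_bigr => j _.
have hj : (j <= #|I|)%N by rewrite -ltnS.
rewrite subSS /Defs.esym leq_subr subKn //.
rewrite mulrA sgsg mul1r.
have -> : (M - (#|I| - j) = (M - #|I|) + j)%N.
  by rewrite subnBA // addnBAC.
by rewrite exprD; ring.
Qed.

Lemma L2 (F : fieldType) n (a : 'I_n -> F) (I : {set 'I_n}) (H u : F) N d :
  (d + #|I| <= N)%N ->
  \sum_(0 <= k < N.+1) (-1) ^+ k * Defs.esym a I (k%:Z - d%:Z) * H ^+ (N - k) * u ^+ k
  = (-1) ^+ d * u ^+ d * H ^+ (N - d - #|I|) * Ph a H u I.
Proof.
move=> hN.
rewrite (big_cat_nat (n:=d)) //=; last by lia.
rewrite big_nat_cond big1 ?add0r; last first.
  move=> k /andP[/andP[_ h2] _].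
  have : (k%:Z - d%:Z < 0)%R by rewrite subr_lt0 ltz_nat.
  by case: (k%:Z - d%:Z) => // m _; rewrite /Defs.esym mulr0 !mul0r.
rewrite -{1}[d]add0n big_addn.
have -> : (N.+1 - d = (N - d).+1)%N by lia.
rewrite -mulrA -L1; last by lia.
rewrite mulr_sumr; apply: eq_bigr => m _.
rewrite PoszD addrK subnDA exprD exprD [(N - m - d)%N]subnAC; ring.
Qed.

Definition E (F : comNzRingType) (n : nat) (H u : F) (f : nat -> F) :=
  \sum_(0 <= k < n.+1) (-1) ^+ k * f k * H ^+ (n - k) * u ^+ k.

Lemma E_add (F : comNzRingType) n (H u : F) f g :
  E n H u (fun k => f k + g k) = E n H u f + E n H u g.
Proof. rewrite /E -big_split; apply: eq_bigr => k _ /=; ring. Qed.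

Lemma E_scale (F : comNzRingType) n (H u : F) c f :
  E n H u (fun k => c * f k) = c * E n H u f.
Proof. by rewrite /E mulr_sumr; apply: eq_bigr => k _; ring. Qed.

Lemma E_sum (F : comNzRingType) n (H u : F) (I : finType) (P : pred I) (f : I -> nat -> F) :
  E n H u (fun k => \sum_(i | P i) f i k) = \sum_(i | P i) E n H u (f i).
Proof.
rewrite /E exchange_big; apply: eq_bigr => k _.
by rewrite mulr_sumr !mulr_suml; apply: eq_bigr => i _.
Qed.


Section Closed.
Variables (F : fieldType) (n : nat) (ai : 'I_n -> F) (H u : F).

Lemma E0 : E n H u (fun k => sigma ai k) = Ph ai H u setT.
Proof.
rewrite /E /sigma L1; last by rewrite cardsT card_ord.
by rewrite cardsT card_ord subnn expr0 mul1r.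
Qed.

Lemma E1 i : (1 <= n)%N -> E n H u (fun k => sigma1 ai i k) = H * Ph ai H u (~: [set i]).
Proof.
move=> hn; rewrite /E /sigma1 L1; last by rewrite cardsC1 card_ord; lia.
rewrite cardsC1 card_ord.
by have -> : (n - n.-1 = 1)%N by lia.
Qed.

Lemma E2 i : (1 <= n)%N ->
  E n H u (fun k => sigma1 ai i (k%:Z - 1)) = - u * Ph ai H u (~: [set i]).
Proof.
move=> hn; rewrite /E /sigma1.
rewrite (@L2 F n ai (~: [set i]) H u n 1); last by rewrite cardsC1 card_ord; lia.
rewrite cardsC1 card_ord.
have -> : (n - 1 - n.-1 = 0)%N by lia.
by rewrite expr0 mulr1 expr1 mulN1r.
Qed.

Lemma card2C (i j : 'I_n) (I : {set 'I_n}) : I = ~: [set i; j] -> i != j -> (#|I| + 2 = n)%N.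
Proof. move=> -> hij; have := cards2 i j; rewrite hij => <-; by rewrite addnC cardsC card_ord. Qed.

Lemma E3 i j : i != j ->
  E n H u (fun k => sigma2 ai i j (k%:Z - 1)) = - u * H * Ph ai H u (~: [set i; j]).
Proof.
move=> hij; have hc := card2C (erefl (~: [set i; j])) hij; rewrite /E /sigma2.
rewrite (@L2 F n ai (~: [set i; j]) H u n 1); last by lia.
rewrite (_ : (n - 1 - _)%N = 1%N); last by lia.
by rewrite !expr1 mulN1r.
Qed.

Lemma E4 i j : i != j ->
  E n H u (fun k => sigma2 ai i j (k%:Z - 2)) = u ^+ 2 * Ph ai H u (~: [set i; j]).
Proof.
move=> hij; have hc := card2C (erefl (~: [set i; j])) hij; rewrite /E /sigma2.
rewrite (@L2 F n ai (~: [set i; j]) H u n 2); last by lia.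
rewrite (_ : (n - 2 - _)%N = 0%N); last by lia.
by rewrite expr0 mulr1 sqrrN expr1n mul1r.
Qed.

Lemma R1 i : Ph ai H u setT = (H - ai i * u) * Ph ai H u (~: [set i]).
Proof.
rewrite /Ph (bigD1 i) ?in_setT //=; congr (_ * _); apply: eq_bigl => l.
by rewrite in_setT in_setC1.
Qed.

Lemma R2 i j : j != i -> Ph ai H u (~: [set i]) = (H - ai j * u) * Ph ai H u (~: [set i; j]).
Proof.
move=> hji; rewrite /Ph (bigD1 j) ?in_setC1 //=; congr (_ * _); apply: eq_bigl => l.
by rewrite !in_setC in_set2 in_set1 negb_or.
Qed.

End Closed.

Lemma Acoef_sigma (F : comNzRingType) n (ai : 'I_n -> F) k : (k <= n)%N ->
  Acoef ai (n - k) = (-1) ^+ k * sigma ai k.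
Proof.
move=> hk; rewrite /sigma /Defs.esym cardsT card_ord hk mulrA sgsg mul1r /Acoef.
congr (_`_ _); symmetry; under eq_bigl => l do rewrite in_setT. by [].
Qed.

Lemma sig1_neg (F : comNzRingType) n (ai : 'I_n -> F) i : sigma1 ai i (0%:Z - 1) = 0.
Proof. by []. Qed.

Definition PT (F : comNzRingType) n (ai : 'I_n -> F) H u := Ph ai H u [set: 'I_n].
Definition P1 (F : comNzRingType) n (ai : 'I_n -> F) H u i := Ph ai H u (~: [set i]).
Definition P2 (F : comNzRingType) n (ai : 'I_n -> F) H u i j := Ph ai H u (~: [set i; j]).

Section Wrap.
Variables (F : fieldType) (n : nat) (ai : 'I_n -> F) (H u : F).
Lemma E0' : E n H u (fun k => sigma ai k) = PT ai H u.
Proof. exact: E0. Qed.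
Lemma E1' i : (1 <= n)%N -> E n H u (fun k => sigma1 ai i k) = H * P1 ai H u i.
Proof. exact: E1. Qed.
Lemma E2' i : (1 <= n)%N ->
  E n H u (fun k => sigma1 ai i (k%:Z - 1)) = - u * P1 ai H u i.
Proof. exact: E2. Qed.
Lemma E3' i j : j != i ->
  E n H u (fun k => sigma2 ai i j (k%:Z - 1)) = - u * H * P2 ai H u i j.
Proof. by move=> h; apply: E3; rewrite eq_sym. Qed.
Lemma E4' i j : j != i ->
  E n H u (fun k => sigma2 ai i j (k%:Z - 2)) = u ^+ 2 * P2 ai H u i j.
Proof. by move=> h; apply: E4; rewrite eq_sym. Qed.
Lemma R1' i : PT ai H u = (H - ai i * u) * P1 ai H u i.
Proof. exact: R1. Qed.
Lemma R2' i j : j != i -> P1 ai H u i = (H - ai j * u) * P2 ai H u i j.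
Proof. exact: R2. Qed.
Lemma R3 i j : j != i -> PT ai H u * P2 ai H u i j = P1 ai H u i * P1 ai H u j.
Proof.
move=> h; rewrite (R1' j) (R2' h); ring.
Qed.
End Wrap.

Lemma key (F : numFieldType) (Pi Py H u a nu PT W A3 A4 Sq Xc Ta R1 : F) :
  H = Pi ^+ 2 + a * Py ^+ 2 -> u = Py ^+ 2 ->
  PT * A3 = - u * (H * Sq - u * Ta) ->
  PT * A4 = (a * u ^+ 2 - u * H) * Xc ->
  Sq = W ^+ 2 - Xc ->
  R1 = - u ^+ 3 * (a * Sq - Ta) ->
  (Pi * (nu * PT + - u * W)) ^+ 2
    - 2 * (Py * PT) * (Py * (-1 / 2) * (nu ^+ 2 * a * PT + 2 * nu * ((H - a * u) * W) + A3 + A4))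
  = R1 + nu ^+ 2 * (H * (PT * PT)).
Proof.
move=> hH hu h3 h4 hS hR; subst R1 Sq.
transitivity ((Pi * (nu * PT + - u * W)) ^+ 2
   + Py ^+ 2 * (PT * (nu ^+ 2 * a * PT + 2 * nu * ((H - a * u) * W)))
   + Py ^+ 2 * (PT * A3) + Py ^+ 2 * (PT * A4)).
  by field.
rewrite h3 h4; subst H u; ring.
Qed.

From mathcomp Require Import all_classical all_reals all_analysis.
Import Order.TTheory GRing.Theory Num.Theory.
Local Open Scope ring_scope.

Theorem proposition26 (R : realType) (n : nat) (ai : 'I_n -> R)
    (eps xi : 'I_n -> R) (nu : R) (a Pa Py y : R) :
  (1 <= n)%N ->
  injective ai ->
  (forall i, eps i = 1 \/ eps i = -1) ->
  0 < a ->
  (forall i, 0 < eps i * (a - ai i)) ->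
  let Delta := fun (b : R) (i : 'I_n) => eps i * (b - ai i) in
  let x := fun b : R => nu / 2 * b + \sum_(i < n) xi i / Num.sqrt (Delta b i) in
  derive1 x a != 0 ->
  let D := Delta a in
  let Pi := a / derive1 x a * Pa in
  let H := Pi ^+ 2 + a * Py ^+ 2 in
  let s := sigma ai in
  let s1 := sigma1 ai in
  let s2 := sigma2 ai in
  let bt := fun k : nat => (-1) ^+ k *
      (nu * s k + \sum_(i < n) xi i / Num.sqrt (D i) * s1 i (k%:Z - 1)) in
  let ct := fun k : nat => (-1) ^+ k.+1 / 2 *
      (nu ^+ 2 * a * s k
       + 2 * nu * (\sum_(i < n) xi i / Num.sqrt (D i) * (s1 i k + a * s1 i (k%:Z - 1)))
       + \sum_(i < n) xi i ^+ 2 / D i * s1 i (k%:Z - 1)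
       + \sum_(i < n) \sum_(j < n | j != i)
           xi i * xi j / Num.sqrt (D i * D j)
             * (s2 i j (k%:Z - 1) + a * s2 i j (k%:Z - 2))) in
  let G := \sum_(0 <= k < n.+1) Acoef ai (n - k) * H ^+ (n - k) * Py ^+ (2 * k + 1) in
  let Q1 := \sum_(0 <= k < n.+1) bt k * H ^+ (n - k) * Pi * Py ^+ (2 * k) in
  let Q2 := \sum_(0 <= k < n.+1) ct k * H ^+ (n - k) * Py ^+ (2 * k + 1) in
  let S1 := Q1 + y * G in
  let S2 := Q2 + y * Q1 + y ^+ 2 / 2 * G in
  let Qc := fun k l : nat => (-1) ^+ (k + l).+1 *
      \sum_(i < n) eps i * xi i ^+ 2 * s1 i (k%:Z - 1) * s1 i (l%:Z - 1) in
  S1 ^+ 2 - 2 * G * S2 =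
    \sum_(1 <= k < n.+1) \sum_(1 <= l < n.+1)
       Qc k l * H ^+ (2 * n - k - l) * Py ^+ (2 * (k + l + 1))
    + nu ^+ 2 * \sum_(0 <= k < n.+1) \sum_(0 <= l < n.+1)
       (-1) ^+ (k + l) * s k * s l * H ^+ (2 * n + 1 - k - l) * Py ^+ (2 * (k + l)).
Proof.
move=> hn hinj heps ha hD Delta x hx D Pi H s s1 s2 bt ct G Q1 Q2 S1 S2 Qc.
set u := Py ^+ 2.
have hS : S1 ^+ 2 - 2 * G * S2 = Q1 ^+ 2 - 2 * G * Q2.
  by rewrite /S1 /S2; field.
have hG : G = Py * E n H u (fun k => s k).
  rewrite /G /E mulr_sumr; apply: eq_big_nat => k /andP[_ hk].
  rewrite ltnS in hk.
  rewrite Acoef_sigma // exprD exprM -/u expr1 /s; ring.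
rewrite E0' in hG.
have hQ1 : Q1 = Pi * (nu * PT ai H u +
      \sum_(i < n) xi i / Num.sqrt (D i) * (- u * P1 ai H u i)).
  transitivity (Pi * E n H u (fun k => nu * s k +
      \sum_(i < n) xi i / Num.sqrt (D i) * s1 i (k%:Z - 1))).
    rewrite /Q1 /E mulr_sumr; apply: eq_bigr => k _.
    rewrite /bt exprM -/u; ring.
  rewrite E_add E_scale E_sum E0'.
  by under eq_bigr => i _ do rewrite E_scale (E2' _ _ _ _ hn).
have hQ2 : Q2 = Py * (-1/2) * (nu ^+ 2 * a * PT ai H u
    + 2 * nu * (\sum_(i < n) xi i / Num.sqrt (D i) * (H * P1 ai H u i + a * (- u * P1 ai H u i)))
    + \sum_(i < n) xi i ^+ 2 / D i * (- u * P1 ai H u i)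
    + \sum_(i < n) \sum_(j < n | j != i) xi i * xi j / Num.sqrt (D i * D j)
        * (- u * H * P2 ai H u i j + a * (u ^+ 2 * P2 ai H u i j))).
  transitivity (Py * (-1/2) * E n H u (fun k => nu ^+ 2 * a * s k
       + 2 * nu * (\sum_(i < n) xi i / Num.sqrt (D i) * (s1 i k + a * s1 i (k%:Z - 1)))
       + \sum_(i < n) xi i ^+ 2 / D i * s1 i (k%:Z - 1)
       + \sum_(i < n) \sum_(j < n | j != i)
           xi i * xi j / Num.sqrt (D i * D j)
             * (s2 i j (k%:Z - 1) + a * s2 i j (k%:Z - 2)))).
    rewrite /Q2 /E !mulr_sumr; apply: eq_bigr => k _.
    rewrite /ct exprS exprD exprM -/u expr1; ring.
  rewrite E_add E_add E_add E_scale E0' E_scale E_sum E_sum E_sum.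
  congr (_ * (_ + _ + _ + _)).
  - congr (_ * _); apply: eq_bigr => i _.
    by rewrite E_scale E_add E_scale (E1' _ _ _ _ hn) (E2' _ _ _ _ hn).
  - by apply: eq_bigr => i _; rewrite E_scale (E2' _ _ _ _ hn).
  - apply: eq_bigr => i _; rewrite E_sum; apply: eq_bigr => j hj.
    by rewrite E_scale E_add E_scale (E3' _ _ _ hj) (E4' _ _ _ hj).
have hR2 : \sum_(0 <= k < n.+1) \sum_(0 <= l < n.+1)
       (-1) ^+ (k + l) * s k * s l * H ^+ (2 * n + 1 - k - l) * Py ^+ (2 * (k + l))
     = H * (PT ai H u * PT ai H u).
  rewrite -E0' /E [in RHS]mulr_suml [in RHS]mulr_sumr.
  apply: eq_big_nat => k /andP[_ hk]; rewrite [in RHS]mulr_sumr [in RHS]mulr_sumr.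
  apply: eq_big_nat => l /andP[_ hl].
  rewrite (_ : (2 * n + 1 - k - l = 1 + (n - k) + (n - l))%N); last by lia.
  rewrite exprM -/u !exprD /s expr1; ring.
have hR1 : \sum_(1 <= k < n.+1) \sum_(1 <= l < n.+1)
       Qc k l * H ^+ (2 * n - k - l) * Py ^+ (2 * (k + l + 1))
     = \sum_(i < n) (- u * (eps i * xi i ^+ 2)) * ((- u * P1 ai H u i) * (- u * P1 ai H u i)).
  transitivity (\sum_(0 <= k < n.+1) \sum_(0 <= l < n.+1)
       Qc k l * H ^+ (2 * n - k - l) * Py ^+ (2 * (k + l + 1))).
    rewrite [in RHS]big_ltn // [X in _ = X + _]big1 ?add0r; last first.
      move=> l _; rewrite /Qc big1 ?mulr0 ?mul0r //.
      by move=> i _; rewrite /s1 sig1_neg mulr0 mul0r.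
    apply: eq_bigr => k _.
    rewrite [in RHS]big_ltn //.
    have -> : Qc k 0%N = 0.
      by rewrite /Qc big1 ?mulr0 // => i _; rewrite /s1 sig1_neg mulr0.
    by rewrite !mul0r add0r.
  transitivity (\sum_(i < n) (- u * (eps i * xi i ^+ 2)) *
      (E n H u (fun k => s1 i (k%:Z - 1)) * E n H u (fun k => s1 i (k%:Z - 1)))); last first.
    by apply: eq_bigr => i _; rewrite /s1 (E2' _ _ _ _ hn).
  rewrite /E; symmetry.
  under eq_bigr => i _ do rewrite mulr_suml mulr_sumr.
  rewrite exchange_big; apply: eq_big_nat => k /andP[_ hk].
  under eq_bigr => i _ do rewrite mulr_sumr mulr_sumr.
  rewrite exchange_big; apply: eq_big_nat => l /andP[_ hl]; symmetry.
  rewrite /Qc mulr_sumr !mulr_suml; apply: eq_bigr => i _.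
  rewrite (_ : (2 * n - k - l = (n - k) + (n - l))%N); last by lia.
  rewrite exprM -/u !exprD exprS expr1 exprD; ring.
rewrite hS hR1 hR2 hQ1 hQ2 hG.
have hDp i : 0 < D i by exact: hD i.
have hv i : xi i ^+ 2 / D i = (xi i / Num.sqrt (D i)) ^+ 2.
  by rewrite expr_div_n sqr_sqrtr // ltW.
have hwij i j : xi i * xi j / Num.sqrt (D i * D j)
    = xi i / Num.sqrt (D i) * (xi j / Num.sqrt (D j)).
  by rewrite sqrtrM ?ltW // mulf_div.
have heps2 i : eps i * xi i ^+ 2 = xi i ^+ 2 / D i * (a - ai i).
  have h := hDp i; rewrite /D /Delta in h *.
  have hne : a - ai i != 0.
    by apply/eqP => e; move: h; rewrite e mulr0 ltxx.
  by case: (heps i) => ->; field; rewrite ?mul1r ?mulN1r ?oppr_eq0.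
set W := \sum_(i < n) xi i / Num.sqrt (D i) * P1 ai H u i.
have hA1 : \sum_(i < n) xi i / Num.sqrt (D i) * (- u * P1 ai H u i) = - u * W.
  by rewrite /W mulr_sumr; apply: eq_bigr => i _; ring.
have hA2 : \sum_(i < n) xi i / Num.sqrt (D i) * (H * P1 ai H u i + a * (- u * P1 ai H u i))
    = (H - a * u) * W.
  by rewrite /W mulr_sumr; apply: eq_bigr => i _; ring.
rewrite hA1 hA2.
apply: (@key _ _ _ _ _ _ _ _ _ _ _ (\sum_(i < n) xi i ^+ 2 / D i * P1 ai H u i ^+ 2)
   (\sum_(i < n) \sum_(j < n | j != i) xi i / Num.sqrt (D i) * (xi j / Num.sqrt (D j))
        * P1 ai H u i * P1 ai H u j)
   (\sum_(i < n) xi i ^+ 2 / D i * ai i * P1 ai H u i ^+ 2)).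
- by [].
- by [].
- rewrite !mulr_sumr -sumrB mulr_sumr; apply: eq_bigr => i _.
  rewrite (R1' ai H u i); ring.
- rewrite !mulr_sumr; apply: eq_bigr => i _; rewrite !mulr_sumr; apply: eq_bigr => j hj.
  rewrite hwij.
  transitivity ((a * u ^+ 2 - u * H) * (xi i / Num.sqrt (D i) * (xi j / Num.sqrt (D j)))
     * (PT ai H u * P2 ai H u i j)); first by ring.
  rewrite (R3 _ _ _ hj); ring.
- apply/eqP; rewrite eq_sym subr_eq; apply/eqP.
  rewrite /W expr2 mulr_suml.
  under eq_bigr => i _ do rewrite mulr_sumr (bigD1 i) //=.
  rewrite big_split /=; congr (_ + _).
    by apply: eq_bigr => i _; rewrite hv; ring.
  apply: eq_bigr => i _; apply: eq_bigr => j _; ring.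
- rewrite mulr_sumr -sumrB mulr_sumr; apply: eq_bigr => i _.
  rewrite heps2; ring.
Qed.
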